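(* Let $(\mathbb{R}^n,S)$ and $(\mathbb{R}^m,T)$ be topological Alexander quandles, where $S$, $T$ are continuous additive automorphisms such that $I-S$ and $I-T$ are invertible. Let $F:\mathbb{R}^n\to\mathbb{R}^m$ be a continuous quandle homomorphism with $F(0)=0$. Then $S$, $T$ and $F$ are $\mathbb{R}$-linear and $FS=TF$.
   Context: The topological Alexander quandle $(\mathbb{R}^n,S)$ has operation $x*y=Sx+(I-S)y$. A quandle homomorphism $F$ satisfies $F(x*y)=F(x)*F(y)$, here $F(Sx+(I-S)y)=TF(x)+(I-T)F(y)$. *)

(* Defs.v *)
From Stdlib Require Import Reals.
From Stdlib Require Vectors.Fin.
Open Scope R_scope.

Definition Vec (n : nat) : Type := Fin.t n -> R.

Definition vadd {n} (x y : Vec n) : Vec n := fun i => x i + y i.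
Definition vsub {n} (x y : Vec n) : Vec n := fun i => x i - y i.
Definition vscale {n} (c : R) (x : Vec n) : Vec n := fun i => c * x i.
Definition vzero (n : nat) : Vec n := fun _ => 0.

(* Continuity w.r.t. the usual (product = Euclidean) topology on R^n, R^m. *)
Definition vcontinuous {n m} (F : Vec n -> Vec m) : Prop :=
  forall x : Vec n, forall eps, eps > 0 -> exists delta, delta > 0 /\
    forall y : Vec n, (forall i, Rabs (y i - x i) < delta) ->
      forall j, Rabs (F y j - F x j) < eps.

Definition additive {n m} (F : Vec n -> Vec m) : Prop :=
  forall x y, F (vadd x y) = vadd (F x) (F y).

Definition bijective {A B : Type} (f : A -> B) : Prop :=
  exists g : B -> A, (forall a, g (f a) = a) /\ (forall b, f (g b) = b).

Definition IminusS {n} (S : Vec n -> Vec n) : Vec n -> Vec n :=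
  fun x => vsub x (S x).

Definition alex_op {n} (S : Vec n -> Vec n) (x y : Vec n) : Vec n :=
  vadd (S x) (IminusS S y).

Definition top_alexander {n} (S : Vec n -> Vec n) : Prop :=
  vcontinuous S /\ additive S /\ bijective S /\ bijective (IminusS S).

Definition quandle_hom {n m} (S : Vec n -> Vec n) (T : Vec m -> Vec m)
  (F : Vec n -> Vec m) : Prop :=
  forall x y, F (alex_op S x y) = alex_op T (F x) (F y).

Definition R_linear {n m} (F : Vec n -> Vec m) : Prop :=
  additive F /\ forall (c : R) x, F (vscale c x) = vscale c (F x).

(* Main.v *)
Require Import Defs.
From Stdlib Require Import Reals.
From Stdlib Require Import Lra Lia ZArith FunctionalExtensionality.
Open Scope R_scope.

Lemma cauchy_cont (h : R -> R)
  (hadd : forall a b, h (a + b) = h a + h b)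
  (hc : forall c eps, eps > 0 -> exists d, d > 0 /\
          forall c', Rabs (c' - c) < d -> Rabs (h c' - h c) < eps) :
  forall c, h c = c * h 1.
Proof.
  assert (h0 : h 0 = 0).
  { pose proof (hadd 0 0) as H. rewrite Rplus_0_r in H. lra. }
  assert (hN : forall a, h (- a) = - h a).
  { intro a. pose proof (hadd a (-a)) as H. rewrite Rplus_opp_r, h0 in H. lra. }
  assert (hnat : forall k a, h (INR k * a) = INR k * h a).
  { induction k; intro a.
    - simpl. rewrite Rmult_0_l, h0. ring.
    - rewrite S_INR. replace ((INR k + 1) * a) with (INR k * a + a) by ring.
      rewrite hadd, IHk. ring. }
  assert (hZ : forall z a, h (IZR z * a) = IZR z * h a).
  { intros z a. destruct (Z_le_gt_dec 0 z).
    - rewrite <- (Z2Nat.id z) by lia. rewrite <- INR_IZR_INZ. apply hnat.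
    - replace z with (- Z.of_nat (Z.to_nat (-z)))%Z by lia.
      rewrite opp_IZR, <- INR_IZR_INZ.
      replace (- INR (Z.to_nat (- z)) * a) with (- (INR (Z.to_nat (- z)) * a)) by ring.
      rewrite hN, hnat. ring. }
  assert (hq : forall z (N : nat), (0 < N)%nat ->
             h (IZR z / INR N) = IZR z / INR N * h 1).
  { intros z N HN. assert (HN' : 0 < INR N) by (apply lt_0_INR; lia).
    assert (E : INR N * h (IZR z / INR N) = IZR z * h 1).
    { rewrite <- hnat. replace (INR N * (IZR z / INR N)) with (IZR z * 1)
        by (field; lra). apply hZ. }
    apply (Rmult_eq_reg_l (INR N)); [| lra]. rewrite E. field. lra. }
  intro c.
  assert (Hall : forall e, e > 0 -> Rabs (h c - c * h 1) < e).
  { intros e He. destruct (hc c (e/2)) as [d [Hd Hdc]]; [lra|].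
    set (d' := Rmin d (e / (2 * (Rabs (h 1) + 1)))).
    assert (Hd' : 0 < d').
    { unfold d'. apply Rmin_pos; [lra|]. pose proof (Rabs_pos (h 1)).
      apply Rdiv_lt_0_compat; lra. }
    destruct (archimed_cor1 d' Hd') as [N [HN1 HN2]].
    assert (HN' : 0 < INR N) by (apply lt_0_INR; lia).
    set (z := up (c * INR N)).
    destruct (archimed (c * INR N)) as [A1 A2]. fold z in A1, A2.
    set (q := IZR z / INR N).
    assert (Hq1 : 0 <= q - c <= / INR N).
    { unfold q. split.
      - apply Rmult_le_reg_l with (INR N); [lra|].
        replace (INR N * (IZR z / INR N - c)) with (IZR z - c * INR N) by (field; lra).
        lra.
      - apply Rmult_le_reg_l with (INR N); [lra|].
        replace (INR N * (IZR z / INR N - c)) with (IZR z - c * INR N) by (field; lra).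
        rewrite Rinv_r by lra. lra. }
    assert (Hqd : Rabs (q - c) < d).
    { rewrite Rabs_right by lra. pose proof (Rmin_l d (e / (2 * (Rabs (h 1) + 1)))).
      fold d' in H. lra. }
    assert (Hqe : Rabs (q - c) * Rabs (h 1) < e / 2).
    { rewrite Rabs_right by lra.
      pose proof (Rmin_r d (e / (2 * (Rabs (h 1) + 1)))) as H. fold d' in H.
      pose proof (Rabs_pos (h 1)).
      assert (q - c < e / (2 * (Rabs (h 1) + 1))) by lra.
      apply Rle_lt_trans with ((e / (2 * (Rabs (h 1) + 1))) * Rabs (h 1)).
      - apply Rmult_le_compat_r; lra.
      - apply Rmult_lt_reg_r with (2 * (Rabs (h 1) + 1)); [lra|].
        replace (e / (2 * (Rabs (h 1) + 1)) * Rabs (h 1) * (2 * (Rabs (h 1) + 1)))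
          with (e * Rabs (h 1)) by (field; lra).
        nra. }
    pose proof (Hdc q Hqd) as Hh. unfold q in Hh. rewrite hq in Hh by lia. fold q in Hh.
    replace (h c - c * h 1) with (-(q * h 1 - h c) + (q - c) * h 1) by ring.
    eapply Rle_lt_trans; [apply Rabs_triang|].
    rewrite Rabs_Ropp, Rabs_mult. lra. }
  destruct (Req_dec (h c - c * h 1) 0) as [E|E]; [lra|].
  pose proof (Rabs_pos_lt _ E). specialize (Hall _ H). lra.
Qed.

Lemma fin_bound : forall n (f : Fin.t n -> R), exists M, 0 <= M /\ forall i, Rabs (f i) <= M.
Proof.
  induction n; intro f.
  - exists 0. split; [lra|]. intro i. inversion i.
  - destruct (IHn (fun i => f (Fin.FS i))) as [M [HM0 HM]].
    exists (Rmax (Rabs (f Fin.F1)) M). split.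
    + eapply Rle_trans; [exact HM0| apply Rmax_r].
    + intro i. apply (Fin.caseS' i (fun i => Rabs (f i) <= Rmax (Rabs (f Fin.F1)) M)).
      * apply Rmax_l.
      * intro p. eapply Rle_trans; [apply (HM p)| apply Rmax_r].
Qed.

Lemma vec_ext {n} (x y : Vec n) : (forall i, x i = y i) -> x = y.
Proof. intro H. apply functional_extensionality. exact H. Qed.

Lemma add_cont_lin {n m} (F : Vec n -> Vec m) :
  additive F -> vcontinuous F -> R_linear F.
Proof.
  intros Ha Hc. split; [exact Ha|]. intros c x. apply vec_ext. intro j.
  set (h := fun a => F (vscale a x) j).
  assert (E : h c = c * h 1).
  { apply cauchy_cont.
    - intros a b. unfold h.
      replace (vscale (a + b) x) with (vadd (vscale a x) (vscale b x)).
      + rewrite Ha. reflexivity.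
      + apply vec_ext. intro i. unfold vadd, vscale. ring.
    - intros c0 eps Heps. destruct (Hc (vscale c0 x) eps Heps) as [d [Hd Hdc]].
      destruct (fin_bound n x) as [M [HM0 HM]].
      exists (d / (M + 1)). split; [apply Rdiv_lt_0_compat; lra|].
      intros c' Hc'. unfold h. apply Hdc. intro i. unfold vscale.
      replace (c' * x i - c0 * x i) with ((c' - c0) * x i) by ring.
      rewrite Rabs_mult. specialize (HM i). pose proof (Rabs_pos (c' - c0)).
      pose proof (Rabs_pos (x i)).
      apply Rle_lt_trans with (Rabs (c' - c0) * (M + 1)).
      + apply Rmult_le_compat_l; lra.
      + apply Rmult_lt_reg_r with (/ (M + 1)).
        * apply Rinv_0_lt_compat; lra.
        * rewrite Rmult_assoc, Rinv_r by lra. rewrite Rmult_1_r. exact Hc'. }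
  unfold h in E. unfold vscale at 2. rewrite E.
  replace (vscale 1 x) with x; [reflexivity|].
  apply vec_ext. intro i. unfold vscale. ring.
Qed.

Theorem mainTheorem14 (n m : nat) (S : Vec n -> Vec n) (T : Vec m -> Vec m)
  (F : Vec n -> Vec m)
  (hS : top_alexander S) (hT : top_alexander T)
  (hFc : vcontinuous F) (hFq : quandle_hom S T F)
  (hF0 : F (vzero n) = vzero m) :
  R_linear S /\ R_linear T /\ R_linear F /\ (forall x, F (S x) = T (F x)).
Proof.
  destruct hS as [Sc [Sa [Sb [g Hg]]]].
  destruct hT as [Tc [Ta _]].
  assert (S0 : S (vzero n) = vzero n).
  { pose proof (Sa (vzero n) (vzero n)) as H.
    replace (vadd (vzero n) (vzero n)) with (vzero n) in H
      by (apply vec_ext; intro; unfold vadd, vzero; ring).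
    apply vec_ext. intro i. apply (f_equal (fun v => v i)) in H.
    unfold vadd in H; cbv beta in H. change (vzero n i) with 0. lra. }
  assert (T0 : T (vzero m) = vzero m).
  { pose proof (Ta (vzero m) (vzero m)) as H2.
    replace (vadd (vzero m) (vzero m)) with (vzero m) in H2
      by (apply vec_ext; intro; unfold vadd, vzero; ring).
    apply vec_ext. intro k. apply (f_equal (fun v => v k)) in H2.
    unfold vadd in H2; cbv beta in H2. change (vzero m k) with 0. lra. }
  assert (HFS : forall x, F (S x) = T (F x)).
  { intro x. pose proof (hFq x (vzero n)) as H. unfold alex_op, IminusS in H.
    rewrite hF0, S0, T0 in H.
    replace (vadd (S x) (vsub (vzero n) (vzero n))) with (S x) in H
      by (apply vec_ext; intro; unfold vadd, vsub, vzero; ring).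
    rewrite H. apply vec_ext. intro i.
    unfold vadd, vsub, vzero. ring. }
  assert (HFI : forall y, F (IminusS S y) = IminusS T (F y)).
  { intro y. pose proof (hFq (vzero n) y) as H. unfold alex_op in H.
    rewrite hF0, S0 in H.
    replace (vadd (vzero n) (IminusS S y)) with (IminusS S y) in H
      by (apply vec_ext; intro; unfold vadd, vzero; ring).
    rewrite H. rewrite <- hF0, <- HFS, S0, hF0.
    apply vec_ext. intro i. unfold vadd, vzero. ring. }
  assert (FA : additive F).
  { intros a b. destruct Sb as [s [Hs1 Hs2]].
    rewrite <- (Hs2 a), <- (proj2 Hg b).
    pose proof (hFq (s a) (g b)) as H. unfold alex_op in H.
    rewrite H, HFS, HFI. reflexivity. }
  split; [apply add_cont_lin; assumption|].
  split; [apply add_cont_lin; assumption|].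
  split; [apply add_cont_lin; assumption|].
  exact HFS.
Qed.
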